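(* For all positive integers $m$ and $k$, the Kneser graph $\mathrm{KG}(m(2k+1),mk)$ (whose odd girth is $2k+1$) admits an orientation in which every cycle of length $2k+1$ is alternating.
   Context: The Kneser graph $\mathrm{KG}(n,k)$ ($n\ge 2k$) has as vertices all $k$-element subsets of $\{1,\dots,n\}$, two being adjacent iff disjoint. The odd girth is the length of a shortest odd cycle. An orientation assigns each edge exactly one direction. In an oriented graph, a subgraph that is a cycle is called alternating if at most one of its vertices has both positive in-degree and positive out-degree within that cycle. *)

(* Defs.v *)
From mathcomp Require Import all_boot.
Set Implicit Arguments. Unset Strict Implicit. Unset Printing Implicit Defensive.

Definition KGvertex (n k : nat) := {A : {set 'I_n} | #|A| == k}.

Definition KGadj (n k : nat) : rel (KGvertex n k) :=
  fun A B => [disjoint val A & val B].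

(* An orientation of a graph with adjacency [adj] is a relation [o]
   (o u v meaning "the edge uv is directed from u to v") such that
   arcs only go along edges and every edge gets exactly one direction. *)
Definition is_orientation (T : finType) (adj : rel T) (o : rel T) : Prop :=
  (forall u v, o u v -> adj u v) /\
  (forall u v, adj u v -> o u v != o v u).

Definition is_cycle_of_length (T : finType) (adj : rel T) (L : nat) (s : seq T) : Prop :=
  [/\ size s = L, uniq s & cycle adj s].

Definition cyc_indeg_pos (T : finType) (o : rel T) (s : seq T) (x : T) : bool :=
  o (prev s x) x || o (next s x) x.
Definition cyc_outdeg_pos (T : finType) (o : rel T) (s : seq T) (x : T) : bool :=
  o x (prev s x) || o x (next s x).

Definition alternating (T : finType) (o : rel T) (s : seq T) : Prop :=
  #|[set x in s | cyc_indeg_pos o s x && cyc_outdeg_pos o s x]| <= 1.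

(* Main.v *)
Require Import Defs.
From mathcomp Require Import all_boot.
From mathcomp Require Import zify.

Set Implicit Arguments. Unset Strict Implicit. Unset Printing Implicit Defensive.

Lemma sum_next (T : eqType) (s : seq T) (f : T -> nat) :
  uniq s -> \sum_(x <- s) f (next s x) = \sum_(x <- s) f x.
Proof.
move=> Us; rewrite -(big_map (next s) xpredT f); apply: perm_big.
apply: uniq_perm => //.
- rewrite map_inj_in_uniq // => x y _ _ /(congr1 (prev s)).
  by rewrite !(prev_next Us).
- move=> y; apply/mapP/idP => [[x xs ->]|ys]; first by rewrite mem_next.
  by exists (prev s y); [rewrite mem_prev | rewrite (next_prev Us)].
Qed.

Lemma local_count (T : eqType) (adj : rel T) (s : seq T) (P : pred T) :
  uniq s -> cycle adj s -> (forall u v, adj u v -> ~~ (P u && P v)) ->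
  \sum_(x <- s) (P x || P (next s x)) = 2 * \sum_(x <- s) P x.
Proof.
move=> Us Hc H.
have E := sum_next (fun x => nat_of_bool (P x)) Us.
rewrite mul2n -addnn -{2}E -big_split /=.
apply: eq_big_seq => x xs.
have := H _ _ (next_cycle Hc xs).
by case: (P x); case: (P (next s x)).
Qed.

Lemma sum_compl (T : eqType) (s : seq T) (P : pred T) :
  \sum_(x <- s) (~~ P x : nat) + \sum_(x <- s) (P x : nat) = size s.
Proof.
rewrite -big_split /= -sum1_size; apply: eq_bigr => x _.
by case: (P x).
Qed.

Lemma seq_le1 (T : eqType) (s : seq T) (q : pred T) :
  uniq s -> \sum_(y <- s) q y <= 1 ->
  forall y1 y2, y1 \in s -> y2 \in s -> q y1 -> q y2 -> y1 = y2.
Proof.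
move=> Us H y1 y2 h1 h2 q1 q2; apply/eqP; apply: contraLR H => ne.
rewrite -ltnNge (bigD1_seq y1) //= q1 -big_filter (bigD1_seq y2) //=.
- by rewrite q2.
- by rewrite mem_filter eq_sym ne.
- by rewrite filter_uniq.
Qed.

Section Main.
Variables (n r : nat) (z : 'I_n) (rpos : 0 < r).
Local Notation V := (KGvertex n r).

Definition in0 (u : V) : bool := z \in val u.
Definition ori : rel V := fun (u v : V) =>
  KGadj u v && (in0 u || (~~ in0 v && (enum_rank u < enum_rank v))).

Lemma adj_sym (u v : V) : KGadj u v -> KGadj v u.
Proof. by rewrite /KGadj disjoint_sym. Qed.

Lemma adj_not00 (u v : V) : KGadj u v -> in0 u -> in0 v = false.
Proof. by move=> H; apply: disjointFr. Qed.

Lemma adj_neq (u v : V) : KGadj u v -> u != v.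
Proof.
move=> H; apply/eqP => E; subst v.
have := disjoint_setI0 H; rewrite setIid => E.
have := valP u; rewrite E cards0 => /eqP Hr; by move: rpos; rewrite -Hr.
Qed.

Lemma ori_xor (u v : V) : KGadj u v -> ori u v = ~~ ori v u.
Proof.
move=> H; have H' := adj_sym H; rewrite /ori H H' /=.
case Hu: (in0 u); case Hv: (in0 v) => //=.
- by rewrite (adj_not00 H Hu) in Hv.
- have : enum_rank u != enum_rank v.
    by apply: contra (adj_neq H) => /eqP /enum_rank_inj ->.
  move=> Hne; rewrite -leqNgt ltn_neqAle; move: Hne; rewrite -(inj_eq val_inj) /= => -> //.
Qed.

Lemma ori_orientation : is_orientation (@KGadj n r) ori.
Proof.
split; first by move=> u v /andP[].
by move=> u v H; rewrite (ori_xor H); case: (ori v u).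
Qed.

Lemma ori_in0 (u v : V) : KGadj u v -> in0 v -> ori u v = false.
Proof.
move=> H Hv; rewrite /ori H Hv /= ?andbF ?orbF.
by apply/negbTE; apply/negP => Hu; rewrite (adj_not00 H Hu) in Hv.
Qed.

Lemma ori_out (u v : V) : ori u v -> in0 u = false -> in0 v = false.
Proof. by rewrite /ori => /andP[_]; case: (in0 u); case: (in0 v). Qed.

Lemma mixed_tail (s : seq V) (x : V) : uniq s -> cycle (@KGadj n r) s -> x \in s ->
  cyc_indeg_pos ori s x -> cyc_outdeg_pos ori s x ->
  exists2 y, y \in s & ~~ (in0 y || in0 (next s y)) /\
     x = (if ori y (next s y) then y else next s y).
Proof.
move=> Us Hc xs Hin Hout.
have Hp := prev_cycle Hc xs; have Hn := next_cycle Hc xs.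
have x0 : in0 x = false.
  apply/negP => Hx; move: Hin.
  by rewrite /cyc_indeg_pos (ori_in0 Hp Hx) (ori_in0 (adj_sym Hn) Hx).
move: Hout; rewrite /cyc_outdeg_pos => /orP [Ho|Ho].
- exists (prev s x); first by rewrite mem_prev.
  rewrite (next_prev Us) (ori_out Ho x0) x0 (ori_xor Hp) Ho /=; split => //.
- exists x => //.
  by rewrite x0 (ori_out Ho x0) Ho.
Qed.

End Main.

Theorem mainTheorem14 (m k : nat) (hm : 0 < m) (hk : 0 < k) :
  exists o : rel (KGvertex (m * (2 * k + 1)) (m * k)),
    is_orientation (@KGadj _ _) o /\
    forall s : seq (KGvertex (m * (2 * k + 1)) (m * k)),
      is_cycle_of_length (@KGadj _ _) (2 * k + 1) s -> alternating o s.
Proof.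
have np : 0 < m * (2 * k + 1) by rewrite muln_gt0 hm addn1.
have rp : 0 < m * k by rewrite muln_gt0 hm hk.
pose z : 'I_(m * (2 * k + 1)) := Ordinal np.
exists (@ori _ _ z); split; first exact: ori_orientation rp.
move=> s [Hs Us Hc].
pose c := fun v : 'I_(m * (2 * k + 1)) => \sum_(x <- s) (v \in val x).
have cle : forall v, c v <= k.
  move=> v.
  have H := @local_count _ _ s (fun x => v \in val x) Us Hc.
  have := sum_compl s (fun x => (v \in val x) || (v \in val (next s x))).
  rewrite H; last first.
    move=> u w Huw; apply/negP => /andP[a b].
    by rewrite (disjointFr Huw a) in b.
  rewrite Hs /c; set S := \sum_(x <- s) (v \in val x); set A := \sum_(x <- s) ~~ _. clearbody A S; lia.
have csum : \sum_v c v = (2 * k + 1) * (m * k).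
  rewrite /c exchange_big /=.
  transitivity (\sum_(x <- s) (m * k)).
    apply: eq_bigr => x _.
    transitivity #|val x|; last exact: (eqP (valP x)).
    rewrite -sum1_card [RHS]big_mkcond /=.
    by apply: eq_bigr => v _; case: (v \in sval x).
  by rewrite big_const_seq count_predT Hs iter_addn_0 mulnC.
have cz : k <= c z.
  pose d := fun v => k - c v.
  have E : \sum_v c v + \sum_v d v = \sum_(v < m * (2 * k + 1)) k.
    rewrite -big_split; apply: eq_bigr => v _; by rewrite /d /= subnKC // cle.
  rewrite big_const_ord iter_addn_0 csum in E.
  have E2 : \sum_v d v = 0 by nia.
  have : d z <= \sum_v d v by rewrite (bigD1 z) //= leq_addr.
  by rewrite E2 /d leqn0 subn_eq0.
have qsum : \sum_(y <- s) ~~ (in0 z y || in0 z (next s y)) <= 1.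
  have := sum_compl s (fun y => in0 z y || in0 z (next s y)).
  rewrite (@local_count _ _ s (in0 z) Us Hc); last first.
    move=> u w Huw; apply/negP => /andP[a b].
    by rewrite (adj_not00 Huw a) in b.
  move: cz; rewrite /c /in0 Hs; set S := \sum_(x <- s) (z \in val x); set A := \sum_(x <- s) ~~ _; clearbody A S; lia.
rewrite /alternating; apply/card_le1_eqP => x1 x2.
rewrite !inE => /andP[x1s /andP[i1 o1]] /andP[x2s /andP[i2 o2]].
have [y1 y1s [q1 ->]] := mixed_tail rp Us Hc x1s i1 o1.
have [y2 y2s [q2 ->]] := mixed_tail rp Us Hc x2s i2 o2.
by rewrite (seq_le1 Us qsum y2s y1s q2 q1).
Qed.
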